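(* Let $X$ be a locally compact Hausdorff, totally disconnected topological space, $G$ a discrete group, $\phi=(\phi_g,X_g,X)_{g\in G}$ a partial action of $G$ on $X$ with every $X_g$ clopen, and $K$ a field. Then the Steinberg algebra $A_K(\mathcal{G}_X)$ is $G$-graded von Neumann regular.
   Context: A partial action of $G$ (identity $\varepsilon$) on a topological space $X$ is $(\phi_g,X_g,X)_{g\in G}$ with $X_g$ open, homeomorphisms $\phi_g:X_{g^{-1}}\to X_g$, and (i) $X_\varepsilon=X$, $\phi_\varepsilon=\operatorname{id}$; (ii) $\phi_g(X_{g^{-1}}\cap X_h)=X_g\cap X_{gh}$; (iii) $\phi_g\phi_h(x)=\phi_{gh}(x)$ for $x\in X_{h^{-1}}\cap X_{h^{-1}g^{-1}}$. The groupoid $\mathcal{G}_X=\bigcup_{g}\{g\}\times X_g\subseteq G\times X$ (product topology) has range $r(g,x)=x$, domain $d(g,x)=\phi_{g^{-1}}(x)$, composition $(g,x)(h,y)=(gh,x)$ when $y=\phi_{g^{-1}}(x)$, inverse $(g^{-1},\phi_{g^{-1}}(x))$, and is $G$-graded by $(g,x)\mapsto g$. The Steinberg algebra $A_K(\mathcal{G}_X)$ consists of compactly supported locally constant functions $\mathcal{G}_X\to K$ with convolution product, graded by $A_K(\mathcal{G}_X)_g=\{f:\operatorname{supp}f\subseteq\{g\}\times X_g\}$. A graded ring is graded von Neumann regular if for each homogeneous $x$ there is $y$ with $xyx=x$. *)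

(* Defs.v *)
From HB Require Import structures.
From mathcomp Require Import all_boot all_algebra.
From Stdlib Require Import List ClassicalEpsilon.
Set Implicit Arguments. Unset Strict Implicit. Unset Printing Implicit Defensive.
Import GRing.Theory.
Local Open Scope ring_scope.

Section Topology.
Variable T : Type.
Variable op : (T -> Prop) -> Prop.

Definition is_topology : Prop :=
  op (fun _ => True) /\
  (forall U V, op U -> op V -> op (fun x => U x /\ V x)) /\
  (forall (F : (T -> Prop) -> Prop), (forall U, F U -> op U) ->
      op (fun x => exists U, F U /\ U x)).

Definition is_closed (C : T -> Prop) : Prop := op (fun x => ~ C x).
Definition clopen (C : T -> Prop) : Prop := op C /\ is_closed C.

Definition hausdorff : Prop :=
  forall x y, x <> y -> exists U V, op U /\ op V /\ U x /\ V y /\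
     (forall z, U z -> V z -> False).

Definition compact (S : T -> Prop) : Prop :=
  forall (I : Type) (F : I -> T -> Prop), (forall i, op (F i)) ->
    (forall x, S x -> exists i, F i x) ->
    exists l : list I, forall x, S x -> exists i, In i l /\ F i x.

Definition locally_compact : Prop :=
  forall x, exists U C, op U /\ U x /\ (forall y, U y -> C y) /\ compact C.

Definition connected (S : T -> Prop) : Prop :=
  ~ exists U V, op U /\ op V /\ (forall x, S x -> U x \/ V x) /\
      (exists x, S x /\ U x) /\ (exists x, S x /\ V x) /\
      (forall x, S x -> U x -> V x -> False).

Definition totally_disconnected : Prop :=
  forall S, connected S -> forall x y, S x -> S y -> x = y.

Definition continuous_on (f : T -> T) (A B : T -> Prop) : Prop :=
  (forall x, A x -> B (f x)) /\
  forall V, op V -> exists U, op U /\ forall x, A x -> (V (f x) <-> U x).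

Definition homeo_on (f : T -> T) (A B : T -> Prop) : Prop :=
  exists g : T -> T, continuous_on f A B /\ continuous_on g B A /\
    (forall x, A x -> g (f x) = x) /\ (forall y, B y -> f (g y) = y).
End Topology.

Definition discrete_open (G : Type) (U : G -> Prop) : Prop := True.

Definition prod_open (A B : Type) (opA : (A -> Prop) -> Prop)
  (opB : (B -> Prop) -> Prop) (W : A * B -> Prop) : Prop :=
  forall p, W p -> exists U V, opA U /\ opB V /\ U p.1 /\ V p.2 /\
     (forall q, U q.1 -> V q.2 -> W q).

Record group (G : Type) := Group {
  gmul : G -> G -> G;
  ginv : G -> G;
  gone : G;
  gmulA : forall a b c, gmul a (gmul b c) = gmul (gmul a b) c;
  gmul1g : forall a, gmul gone a = a;
  gmulVg : forall a, gmul (ginv a) a = gone }.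

Definition partial_action (X G : Type) (opX : (X -> Prop) -> Prop)
  (Gr : group G) (Xg : G -> X -> Prop) (phi : G -> X -> X) : Prop :=
  (forall g, opX (Xg g)) /\
  (forall g, homeo_on opX (phi g) (Xg (ginv Gr g)) (Xg g)) /\
  (forall x, Xg (gone Gr) x) /\ (forall x, phi (gone Gr) x = x) /\
  (forall g h y, (Xg g y /\ Xg (gmul Gr g h) y) <->
      exists x, Xg (ginv Gr g) x /\ Xg h x /\ phi g x = y) /\
  (forall g h x, Xg (ginv Gr h) x -> Xg (gmul Gr (ginv Gr h) (ginv Gr g)) x ->
      phi g (phi h x) = phi (gmul Gr g h) x).

(* fsum F is the sum of the finitely supported family F (chosen classically;
   unspecified if F is not finitely supported) *)
Definition fsum_spec (I : Type) (K : nmodType) (F : I -> K) (s : K) : Prop :=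
  exists l : list I, NoDup l /\ (forall k, F k <> 0 -> In k l) /\
     s = \sum_(k <- l) F k.

Definition fsum (I : Type) (K : nmodType) (F : I -> K) : K :=
  epsilon (inhabits 0) (fsum_spec F).

(* A function on G_X is represented as f : G -> X -> K, where f g x is the
   value at (g,x); elements of the algebra vanish outside G_X. *)
Definition steinberg (X G : Type) (opX : (X -> Prop) -> Prop)
  (Xg : G -> X -> Prop) (K : fieldType) (f : G -> X -> K) : Prop :=
  (forall g x, ~ Xg g x -> f g x = 0) /\
  (* locally constant on G_X (G_X carries the subspace topology of G x X,
     G discrete) *)
  (forall g x, Xg g x -> exists W, prod_open (@discrete_open G) opX W /\
       W (g, x) /\ forall h y, W (h, y) -> Xg h y -> f h y = f g x) /\
  compact (prod_open (@discrete_open G) opX) (fun p => f p.1 p.2 <> 0).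

Definition homogeneous (X G : Type) (K : fieldType) (g : G)
  (f : G -> X -> K) : Prop := forall h x, f h x <> 0 -> h = g.

(* convolution: (f * h)(g,x) = sum_{alpha beta = (g,x)} f(alpha) h(beta)
   = sum_k f(k,x) h(k^-1 g, phi_{k^-1} x) *)
Definition conv (X G : Type) (Gr : group G) (phi : G -> X -> X)
  (K : fieldType) (f h : G -> X -> K) : G -> X -> K :=
  fun g x => fsum (fun k => f k x * h (gmul Gr (ginv Gr k) g) (phi (ginv Gr k) x)).

Definition graded_von_neumann_regular (G R : Type) (A : R -> Prop)
  (deg : G -> R -> Prop) (mul : R -> R -> R) : Prop :=
  forall g x, A x -> deg g x -> exists y, A y /\ mul (mul x y) x = x.

(* Main.v *)
Require Import Defs.
From HB Require Import structures.
From mathcomp Require Import all_boot all_algebra.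
From Stdlib Require Import List ClassicalEpsilon Classical FunctionalExtensionality.
Import GRing.Theory.
Local Open Scope ring_scope.

Section Grp.
Variables (G : Type) (Gr : group G).
Lemma gmulV' a : gmul Gr a (ginv Gr a) = gone Gr.
Proof.
have E : gmul Gr (gmul Gr a (ginv Gr a)) (gmul Gr a (ginv Gr a)) = gmul Gr a (ginv Gr a).
  by rewrite -gmulA (gmulA Gr (ginv Gr a)) gmulVg gmul1g.
rewrite -(gmul1g Gr (gmul Gr a (ginv Gr a))).
rewrite -(gmulVg Gr (gmul Gr a (ginv Gr a))) -gmulA E.
by rewrite gmulVg.
Qed.
Lemma gmul1' a : gmul Gr a (gone Gr) = a.
Proof. by rewrite -(gmulVg Gr a) gmulA gmulV' gmul1g. Qed.
Lemma ginvK' a : ginv Gr (ginv Gr a) = a.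
Proof.
rewrite -(gmul1' (ginv Gr (ginv Gr a))) -(gmulVg Gr a) gmulA gmulVg.
by rewrite gmul1g.
Qed.
Lemma ginv1' : ginv Gr (gone Gr) = gone Gr.
Proof. by rewrite -(gmul1' (ginv Gr (gone Gr))) gmulVg. Qed.
Lemma gcancel g k : gmul Gr (ginv Gr g) k = ginv Gr g -> k = gone Gr.
Proof.
move=> E. rewrite -(gmul1g Gr k) -{1}(gmulV' g) -gmulA E. exact: gmulV'.
Qed.
End Grp.

Lemma sum_list_single (I : Type) (K : nmodType) (F : I -> K) (k0 : I) l :
  (forall k, k <> k0 -> F k = 0%R) -> NoDup l ->
  (In k0 l -> \sum_(k <- l) F k = F k0) /\ (~ In k0 l -> \sum_(k <- l) F k = 0%R).
Proof.
move=> HF; elim: l => [|a l IH] Hnd.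
  by split=> [[]|_]; rewrite big_nil.
inversion Hnd; subst. have [IH1 IH2] := IH H2.
rewrite big_cons; split.
  move=> [Ea|Hin].
    subst a. by rewrite IH2 // addr0.
  rewrite IH1 // HF ?add0r //. by move=> E; subst.
move=> Hn. rewrite IH2; last by move=> Hi; apply: Hn; right.
rewrite HF ?addr0 //. by move=> E; subst; apply: Hn; left.
Qed.

Lemma fsum_single (I : Type) (K : nmodType) (F : I -> K) (k0 : I) :
  (forall k, k <> k0 -> F k = 0%R) -> fsum F = F k0.
Proof.
move=> HF. unfold fsum.
have Hs : fsum_spec F (F k0).
  exists (k0 :: nil). split; first by constructor; [move=> [] | constructor].
  split.
    move=> k Hk. left. apply: NNPP => Hn. apply: Hk. apply: HF. by move=> E; apply: Hn.
  by rewrite big_seq1.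
have := epsilon_spec (inhabits 0%R) (fsum_spec F) (ex_intro _ _ Hs).
move=> [l [Hnd [Hin ->]]].
have [H1 H2] := @sum_list_single _ _ F k0 l HF Hnd.
case: (classic (In k0 l)) => Hi; first exact: H1.
rewrite H2 //. apply: NNPP => Hn. apply: Hi. apply: Hin. by move=> E; apply: Hn; rewrite E.
Qed.

Theorem mainTheorem6 (X : Type) (opX : (X -> Prop) -> Prop)
  (G : Type) (Gr : group G) (Xg : G -> X -> Prop) (phi : G -> X -> X)
  (K : fieldType) :
  is_topology opX -> hausdorff opX -> locally_compact opX ->
  totally_disconnected opX ->
  partial_action opX Gr Xg phi ->
  (forall g, clopen opX (Xg g)) ->
  graded_von_neumann_regular (steinberg opX Xg (K := K))
    (fun g f => homogeneous g f) (conv Gr phi (K := K)).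
Proof.
move=> [HT [HI HU]] _ _ _ [Hopen [Hhomeo [Hone [Hphi1 [Hii Hiii]]]]] _.
move=> g f Hf Hhom.
pose gi := ginv Gr g.
have Hgg : ginv Gr gi = g by rewrite /gi ginvK'.
have [Hmap Hc] : continuous_on opX (phi g) (Xg gi) (Xg g).
  by have [h [Hc0 _]] := Hhomeo g.
have [Hmap' Hc'] : continuous_on opX (phi gi) (Xg g) (Xg gi).
  by have [h [Hc0 _]] := Hhomeo gi; rewrite Hgg in Hc0.
have Hback : forall x, Xg g x -> phi g (phi gi x) = x.
  move=> x Hx. rewrite Hiii.
  - by rewrite /gi gmulV' Hphi1.
  - by rewrite Hgg.
  - by rewrite Hgg -/gi gmulV' ; apply: Hone.
have Hback2 : forall z, Xg gi z -> phi gi (phi g z) = z.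
  move=> z Hz. rewrite Hiii //.
  - by rewrite /gi gmulVg Hphi1.
  - by rewrite Hgg gmulVg; apply: Hone.
have [Hf0 [Hflc Hfc]] := Hf.
have Hfk : forall k x, f g x = 0%R -> f k x = 0%R.
  move=> k x H0. apply: NNPP => Hn. have E := Hhom _ _ Hn. by subst k.
pose y : G -> X -> K := fun h z =>
  match excluded_middle_informative (h = gi /\ Xg gi z) with
  | left _ => ((f g (phi g z))^-1)%R | right _ => 0%R end.
exists y. split.
- split; [|split].
  + move=> h z Hn. rewrite /y. case: excluded_middle_informative => // [[E Hz]].
    by subst h.
  + move=> h z Hz. case: (classic (h = gi)) => [Eh|Nh].
    * subst h.
      have Hz' := Hmap z Hz.
      have [W [HW [HWp HWc]]] := Hflc g (phi g z) Hz'.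
      have [U [V [_ [HV [HU1 [HV2 HUV]]]]]] := HW _ HWp.
      have [U' [HU' Hiff]] := Hc V HV.
      exists (fun p => p.1 = gi /\ U' p.2 /\ Xg gi p.2). split; [|split].
      -- move=> p [E [H1 H2]]. exists (fun h => h = gi), (fun x => U' x /\ Xg gi x).
         split; first exact Logic.I. split; first by apply: HI.
         split; first by []. split; first by []. by move=> q.
      -- split=> //; split=> //. by apply/(Hiff z Hz).
      -- move=> h y0 [E [Hu Hx]] _. simpl in *. subst h. rewrite /y.
         case: excluded_middle_informative => [_|[]]; last by [].
         case: excluded_middle_informative => [_|[]]; last by [].
         congr (_^-1)%R. apply: HWc; last exact: Hmap.
         apply: HUV => //. by apply/(Hiff y0 Hx).
    * exists (fun p => p.1 = h). split; [|split] => //.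
      -- move=> p E. exists (fun k => k = h), (fun _ => True).
         split; first exact Logic.I. split; first exact HT. by split.
      -- move=> h' y0 E _. simpl in E. subst h'. rewrite /y.
         case: excluded_middle_informative => [[E _]|_]; first by [].
         case: excluded_middle_informative => [[E _]|_]; by [].
  + move=> I F HFo Hcov.
    pose F' i := fun p : G * X => Xg g p.2 /\ F i (gi, phi gi p.2).
    have [l Hl] : exists l : list I, forall x, f x.1 x.2 <> 0%R -> exists i, In i l /\ F' i x.
      apply: (Hfc I F').
      * move=> i p [Hx HFi].
        have [U [V [_ [HV [HU1 [HV2 HUV]]]]]] := HFo i _ HFi.
        have [U' [HU' Hiff]] := Hc' V HV.
        exists (fun _ => True), (fun x => U' x /\ Xg g x).
        split; first exact Logic.I. split; first by apply: HI.
        split; first exact Logic.I. split; first by split=> //; apply/(Hiff _ Hx).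
        move=> q _ [Hq1 Hq2]. split=> //. apply: HUV => //. by apply/(Hiff _ Hq2).
      * move=> [h x] Hne. simpl in Hne.
        have Eh := Hhom _ _ Hne. subst h.
        have Hx : Xg g x by apply: NNPP => Hn; apply: Hne; apply: Hf0.
        have Hz := Hmap' x Hx.
        have [i Hi] : exists i, F i (gi, phi gi x).
          apply: Hcov. rewrite /y /=. case: excluded_middle_informative => [_|[]]; last by [].
          rewrite Hback // => /eqP. by rewrite invr_eq0 => /eqP.
        by exists i.
    exists l. move=> [h z] Hne. simpl in Hne. move: Hne; rewrite /y.
    case: excluded_middle_informative => [[Eh Hz]|_]; last by [].
    subst h => Hne.
    have Hn : f g (phi g z) <> 0%R by move=> E; apply: Hne; rewrite E invr0.
    have [i [Hin [_ HFi]]] := Hl (g, phi g z) Hn.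
    simpl in HFi. rewrite Hback2 in HFi => //. by exists i.
- have He : forall k x, conv Gr phi f y k x = (f g x * y (gmul Gr gi k) (phi gi x))%R.
    move=> k x. rewrite /conv. apply: fsum_single => k' Nk.
    case: (classic (f k' x = 0%R)) => [->|Hn]; first by rewrite mul0r.
    by have := Hhom _ _ Hn.
  apply: functional_extensionality => k. apply: functional_extensionality => x.
  rewrite {1}/conv (@fsum_single _ _ _ (gone Gr)); last first.
    move=> k' Nk. rewrite He /y.
    case: excluded_middle_informative => [[E _]|_]; last by rewrite mulr0 mul0r.
    by have := @gcancel _ Gr g k' E.
  rewrite ginv1' gmul1g Hphi1 He gmul1'.
  case: (classic (Xg g x)) => Hx; last first.
    have H0 := Hf0 _ _ Hx. by rewrite H0 !mul0r (Hfk _ _ H0).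
  rewrite /y. case: excluded_middle_informative => [_|[]]; last by split=> //; apply: Hmap'.
  rewrite Hback //. case: (eqVneq (f g x) 0%R) => [H0|Hn].
    by rewrite H0 (Hfk _ _ H0) mulr0.
  by rewrite mulfV // mul1r.
Qed.
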